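(* Let $\alpha>0$ be fixed and let $\mathscr{K}$ be a convex feasible functional. Consider the augmented dual ascent scheme $$x^{n+1} = \operatorname{arg\,min}_{x} \mathscr{K}(x)+\langle x,\Lambda^n\rangle +\frac{\alpha}{2}\|x\|^2,\qquad \Lambda^{n+1} = \Lambda^{n} + \alpha\mathcal{P}_{\mathcal{M}^\perp}(x^{n+1}),\qquad \Lambda^0=0.$$ Suppose that $(\Lambda^{n})_{n=1}^\infty$ is a bounded sequence. Then $(x^{n})_{n=1}^\infty$ and $(\Lambda^{n})_{n=1}^\infty$ converge to some limits $x^\star$ and $\Lambda^\star$, where $x^\star$ is the solution to $\operatorname{arg\,min}_{x\in\mathcal{M}}\mathscr{K}(x)+\frac{\alpha}{2}\|x\|^2$.
   Context: $\mathcal{H}$ is a finite dimensional Hilbert space, $\mathcal{M}\subset\mathcal{H}$ a linear subspace, $\mathcal{P}_{\mathcal{M}^\perp}$ the orthogonal projection onto $\mathcal{M}^\perp$. A functional $\mathscr{K}:\mathcal{H}\to(-\infty,\infty]$ is called feasible if it is lower semi-continuous, proper (not identically $\infty$), bounded below, and satisfies $\lim_{\|x\|\rightarrow\infty}\mathscr{K}(x)/\|x\|=\infty$. *)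

(* Defs.v *)
(* The finite-dimensional real Hilbert space H is
   modelled as 'rV[R]_d with the standard (Euclidean) inner product. *)
From HB Require Import structures.
From mathcomp Require Import all_boot all_order all_algebra.
From mathcomp Require Import all_classical all_reals all_analysis.
Set Implicit Arguments. Unset Strict Implicit. Unset Printing Implicit Defensive.
Import Order.TTheory GRing.Theory Num.Theory.
Import numFieldNormedType.Exports.
Local Open Scope ring_scope.

Section Defs.
Variables (R : realType) (d : nat).
Local Notation H := 'rV[R]_d.

Definition ip (x y : H) : R := (x *m y^T) 0 0.
Definition enorm (x : H) : R := Num.sqrt (ip x x).

(* The linear subspace M is the row space of a square matrix M (mxalgebra). *)
Definition in_sub (M : 'M[R]_d) (x : H) : Prop := (x <= M)%MS.
Definition in_perp (M : 'M[R]_d) (x : H) : Prop :=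
  forall y : H, in_sub M y -> ip x y = 0.
Definition is_orth_proj_perp (M : 'M[R]_d) (P : H -> H) : Prop :=
  forall v : H, in_perp M (P v) /\ in_sub M (v - P v).

Local Open Scope ereal_scope.
Definition feasible (K : H -> \bar R) : Prop :=
  [/\ forall x, K x != -oo,
      lower_semicontinuous K,
      exists x, K x != +oo,
      exists c : R, forall x, c%:E <= K x &
      forall A : R, exists r : R, forall x : H,
        (r <= enorm x)%R -> (A * enorm x)%:E <= K x ].
(* note: for enorm x > 0, A*|x| <= K x iff K x / |x| >= A; this is the
   unfolding of lim_{|x| -> oo} K(x)/|x| = +oo *)

Definition convex_fun (K : H -> \bar R) : Prop :=
  forall (x y : H) (t : R), (0 <= t <= 1)%R ->
    K (t *: x + (1 - t) *: y)%R <= t%:E * K x + (1 - t)%:E * K y.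
End Defs.

(* Main.v *)
Require Import Defs.
From HB Require Import structures.
From mathcomp Require Import all_boot all_order all_algebra.
From mathcomp Require Import all_classical all_reals all_analysis.
From mathcomp Require Import ring lra.
Import Order.TTheory GRing.Theory Num.Theory.
Import numFieldNormedType.Exports.
Local Open Scope classical_set_scope.
Local Open Scope ring_scope.
Section Reals.
Context {R : realType}.

Lemma mono_le (g : nat -> R) : (forall n, g n <= g n.+1) ->
  forall n m, (n <= m)%N -> g n <= g m.
Proof.
move=> h n m /subnK <-; elim: (m - n)%N => [|k IH]; first by rewrite add0n.
by apply: le_trans IH (h _).
Qed.

Lemma mono_cauchy (g : nat -> R) B : (forall n, g n <= g n.+1) ->
  (forall n, g n <= B) ->
  forall e, 0 < e -> exists N, forall n m, (N <= n)%N -> g m - g n <= e.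
Proof.
move=> hm hB e e0.
have hs : has_sup (range g).
  split; first by exists (g 0%N), 0%N.
  by exists B => _ [n _ <-].
have [_ [N _ <-] hN] := sup_adherent e0 hs.
exists N => n m Nn.
have : g m <= sup (range g) by apply: sup_upper_bound => //; exists m.
have := @mono_le g hm _ _ Nn; lra.
Qed.

Lemma le_eta0 (c : R) : (forall e, 0 < e -> c <= e) -> c <= 0.
Proof.
move=> h; case: (lerP c 0) => // c0.
have := h (c / 2) (divr_gt0 c0 (ltr0Sn _ 1)); lra.
Qed.

Lemma abs_eta0 (c : R) : (forall e, 0 < e -> 2 * `|c| <= e) -> c = 0.
Proof.
move=> h; apply/normr0_eq0/le_anti; rewrite normr_ge0 andbT.
apply: le_eta0 => e e0; have := h e e0; have := normr_ge0 c; lra.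
Qed.

Lemma real_lim0 (A E : R) : 0 <= E ->
  (forall t, 0 < t -> t <= 1 -> 0 <= t * A + t ^+ 2 * E) -> 0 <= A.
Proof.
move=> E0 h; case: (lerP 0 A) => // A0.
pose t := - A / (- A + E).
have den : 0 < - A + E by lra.
have t0 : 0 < t by rewrite /t divr_gt0 //; lra.
have t1 : t <= 1 by rewrite /t ler_pdivrMr //; lra.
have q : 0 < A ^+ 2 / (- A + E).
  by rewrite divr_gt0 // exprn_even_gt0 //; lra.
have := mulr_gt0 t0 q.
have := h t t0 t1.
have -> : t * A + t ^+ 2 * E = - (t * (A ^+ 2 / (- A + E))).
  rewrite /t; field; lra.
lra.
Qed.

Definition ev (P : nat -> Prop) := exists N, forall n, (N <= n)%N -> P n.

Lemma evI (P Q : nat -> Prop) : ev P -> ev Q -> ev (fun n => P n /\ Q n).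
Proof.
move=> [N1 h1] [N2 h2]; exists (maxn N1 N2) => n hn.
by split; [apply: h1 | apply: h2]; apply: leq_trans hn; rewrite ?leq_maxl ?leq_maxr.
Qed.

Lemma ev_ex (P : nat -> Prop) : ev P -> forall N, exists n, (N <= n)%N /\ P n.
Proof.
move=> [N1 h1] N; exists (maxn N1 N); split; first by rewrite leq_maxr.
by apply: h1; rewrite leq_maxl.
Qed.

End Reals.
Section IP.
Context {R : realType} {d : nat}.
Local Notation H := 'rV[R]_d.
Implicit Types (u v w : H).

Lemma ipE u v : ip u v = \sum_j u 0 j * v 0 j.
Proof. by rewrite /ip !mxE; apply: eq_bigr => j _; rewrite mxE. Qed.

Lemma ipC u v : ip u v = ip v u.
Proof. by rewrite !ipE; apply: eq_bigr => j _; rewrite mulrC. Qed.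

Lemma ipDl u v w : ip (u + v) w = ip u w + ip v w.
Proof. by rewrite !ipE -big_split; apply: eq_bigr => j _; rewrite mxE mulrDl. Qed.

Lemma ipZl a u v : ip (a *: u) v = a * ip u v.
Proof. by rewrite !ipE mulr_sumr; apply: eq_bigr => j _; rewrite mxE mulrA. Qed.

Lemma ipNl u v : ip (- u) v = - ip u v.
Proof. by rewrite -scaleN1r ipZl mulN1r. Qed.

Lemma ipBl u v w : ip (u - v) w = ip u w - ip v w.
Proof. by rewrite ipDl ipNl. Qed.

Lemma ipDr u v w : ip w (u + v) = ip w u + ip w v.
Proof. by rewrite ipC ipDl !(ipC w). Qed.

Lemma ipZr a u v : ip v (a *: u) = a * ip v u.
Proof. by rewrite ipC ipZl ipC. Qed.

Lemma ipNr u v : ip v (- u) = - ip v u.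
Proof. by rewrite ipC ipNl ipC. Qed.

Lemma ipBr u v w : ip w (u - v) = ip w u - ip w v.
Proof. by rewrite ipDr ipNr. Qed.

Lemma ip0l u : ip 0 u = 0.
Proof. by rewrite -(scale0r 0) ipZl mul0r. Qed.

Lemma ip0r u : ip u 0 = 0.
Proof. by rewrite ipC ip0l. Qed.

Lemma ip_ge0 u : 0 <= ip u u.
Proof. by rewrite ipE; apply: sumr_ge0 => j _; rewrite -expr2 sqr_ge0. Qed.

Lemma enorm2 u : enorm u ^+ 2 = ip u u.
Proof. by rewrite /enorm sqr_sqrtr // ip_ge0. Qed.

Lemma entry_le_norm u j : `|u 0 j| <= `|u|.
Proof.
have -> : `|u| = mx_norm u by [].
rewrite mx_normrE.
exact: (le_bigmax _ (fun ij : 'I_1 * 'I_d => `|u ij.1 ij.2|) (0, j)).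
Qed.

Lemma norm_le_entries u e : 0 <= e -> (forall j, `|u 0 j| <= e) -> `|u| <= e.
Proof.
move=> e0 H; have -> : `|u| = mx_norm u by [].
rewrite mx_normrE.
apply/bigmax_leP; split => // -[i j] _ /=.
by rewrite (ord1 i); exact: H.
Qed.

Lemma norm_sq_le_ip u : `|u| ^+ 2 <= ip u u.
Proof.
have -> : `|u| = mx_norm u by [].
have [->|] := eqVneq (mx_norm u) 0.
  by rewrite expr0n /= ip_ge0.
move=> /mx_norm_neq0 [[i j] /= Hu]; rewrite (ord1 i) in Hu.
rewrite Hu ipE (bigD1 j) //= real_normK ?num_real //.
rewrite -expr2 lerDl; apply: sumr_ge0 => k _; rewrite -expr2 sqr_ge0 //.
Qed.

Lemma ip_le_norm_sq u : ip u u <= d%:R * `|u| ^+ 2.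
Proof.
rewrite ipE -[d in d%:R]card_ord -sum1_card natr_sum mulr_suml.
apply: ler_sum => j _; rewrite mul1r -expr2 -real_normK ?num_real //.
rewrite lerXn2r ?nnegrE ?normr_ge0 //; exact: entry_le_norm.
Qed.
Lemma real_small (a b c B eta : R) : 0 <= B -> 0 < eta ->
  a <= B -> b <= eta ^+ 2 / (4 * (B + 1)) ->
  (forall s, 0 < s -> 0 <= s ^+ 2 * a - 2 * s * c + b) ->
  (forall s, 0 < s -> 0 <= s ^+ 2 * a + 2 * s * c + b) ->
  2 * `|c| <= eta.
Proof.
move=> B0 e0 aB bB h1 h2.
set s := eta / (2 * (B + 1)).
have s0 : 0 < s by rewrite /s divr_gt0 // mulr_gt0 // ltr_wpDl.
have k : 2 * `|c| * s <= s ^+ 2 * B + b.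
  have := h1 s s0; have := h2 s s0.
  have : s ^+ 2 * a <= s ^+ 2 * B by rewrite ler_wpM2l // sqr_ge0.
  case: (ler0P c) => hc; nra.
have e1 : b <= s * eta / 2.
  apply: (le_trans bB); rewrite /s le_eqVlt; apply/orP; left; apply/eqP.
  field; apply/eqP => /eqP; rewrite -/(_ != _); lra.
have e2 : s ^+ 2 * B <= s * eta / 2.
  rewrite expr2 -mulrA -mulrA ler_wpM2l ?ltW //.
  rewrite /s. have -> : eta / (2 * (B + 1)) * B = eta / 2 - eta / (2 * (B + 1)).
    field; apply/eqP => /eqP; rewrite -/(_ != _); lra.
  by rewrite -/s; lra.
clearbody s.
rewrite -(@ler_pM2r _ s) //; lra.
Qed.

Lemma ip_small u v B eta : 0 <= B -> 0 < eta -> ip u u <= B ->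
  ip v v <= eta ^+ 2 / (4 * (B + 1)) -> 2 * `|ip u v| <= eta.
Proof.
move=> B0 e0 uB vB; apply: (@real_small (ip u u) (ip v v) (ip u v) B eta B0 e0 uB vB) => s s0.
  have := ip_ge0 (s *: u - v).
  rewrite !(ipBl, ipBr, ipZl, ipZr) (ipC v u); lra.
have := ip_ge0 (s *: u + v).
rewrite !(ipDl, ipDr, ipZl, ipZr) (ipC v u); lra.
Qed.

Lemma ip_tri u v : ip (u + v) (u + v) <= 2 * ip u u + 2 * ip v v.
Proof.
have := ip_ge0 (u - v); rewrite !(ipBl, ipBr, ipDl, ipDr) (ipC v u); lra.
Qed.

Lemma ip_orth_split u v : ip u v = 0 -> ip v v <= ip (u + v) (u + v).
Proof.
move=> o; rewrite ipDl !ipDr o (ipC v u) o add0r addr0 lerDr; exact: ip_ge0.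
Qed.

Lemma ip_step u v a : ip (u + a *: v) (u + a *: v) = ip u u + 2 * a * ip v u + a ^+ 2 * ip v v.
Proof. rewrite !(ipDl, ipDr, ipZl, ipZr) (ipC u v); ring. Qed.

Lemma lip_aux a u w : 0 < a -> a * ip u u <= - ip u w -> a ^+ 2 * ip u u <= ip w w.
Proof.
move=> a0 h; have := ip_ge0 (a *: u + w).
rewrite !(ipDl, ipDr, ipZl, ipZr) (ipC w u) => h2.
have h3 := ler_wpM2l (ltW a0) h; nra.
Qed.

Lemma pos_small (B e : R) : 0 <= B -> 0 < e -> 0 < e ^+ 2 / (4 * (B + 1)).
Proof. by move=> B0 e0; rewrite divr_gt0 ?exprn_gt0 // mulr_gt0 // ltr_wpDl. Qed.

Lemma ip_chain (a b c : H) : ip (a - c) (a - c) <= 2 * ip (a - b) (a - b) + 2 * ip (b - c) (b - c).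
Proof.
have -> : a - c = (a - b) + (b - c) by rewrite addrA subrK.
exact: ip_tri.
Qed.

Lemma ip_expand u v : ip (u + v) (u + v) = ip u u + 2 * ip u v + ip v v.
Proof. rewrite !(ipDl, ipDr) (ipC v u); ring. Qed.

Lemma ip_subC u v : ip (u - v) (u - v) = ip (v - u) (v - u).
Proof. by rewrite -opprB ipNl ipNr opprK. Qed.

Lemma sub_add (M : 'M[R]_d) u v : in_sub M u -> in_sub M v -> in_sub M (u + v).
Proof. exact: addmx_sub. Qed.
Lemma sub_scale (M : 'M[R]_d) a u : in_sub M u -> in_sub M (a *: u).
Proof. exact: scalemx_sub. Qed.
Lemma sub_sub (M : 'M[R]_d) u v : in_sub M u -> in_sub M v -> in_sub M (u - v).
Proof. by move=> hu hv; apply: sub_add => //; rewrite -scaleN1r; apply: sub_scale. Qed.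

Lemma perp_add (M : 'M[R]_d) u v : in_perp M u -> in_perp M v -> in_perp M (u + v).
Proof. by move=> hu hv y hy; rewrite ipDl hu // hv // addr0. Qed.
Lemma perp_scale (M : 'M[R]_d) a u : in_perp M u -> in_perp M (a *: u).
Proof. by move=> hu y hy; rewrite ipZl hu // mulr0. Qed.
Lemma perp_sub (M : 'M[R]_d) u v : in_perp M u -> in_perp M v -> in_perp M (u - v).
Proof. by move=> hu hv; apply: perp_add => //; rewrite -scaleN1r; apply: perp_scale. Qed.
Lemma perp0 (M : 'M[R]_d) : in_perp M 0.
Proof. by move=> y _; rewrite ip0l. Qed.
Lemma orth (M : 'M[R]_d) u w : in_sub M u -> in_perp M w -> ip u w = 0.
Proof. by move=> hu hw; rewrite ipC hw. Qed.

Lemma CONV (u : nat -> H) v :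
  (forall e, 0 < e -> exists N, forall n, (N <= n)%N -> ip (u n - v) (u n - v) <= e) ->
  u @ \oo --> v.
Proof.
move=> h; apply/cvg_ballP => e e0.
have [N hN] := h (e ^+ 2 / 2) (divr_gt0 (exprn_gt0 2 e0) (ltr0Sn _ 1)).
exists N => // n /= Nn; rewrite -ball_normE /ball_ /=.
have := hN n Nn; rewrite ip_subC => hle.
have := norm_sq_le_ip (v - u n) => h2.
have : `|v - u n| ^+ 2 < e ^+ 2 by apply: (le_lt_trans h2 (le_lt_trans hle _)); have := exprn_gt0 2 e0; lra.
by rewrite ltr_pXn2r // ?nnegrE ?normr_ge0 // ltW.
Qed.

Lemma CLUSTER (u : nat -> H) B : (forall n, ip (u n) (u n) <= B) ->
  exists v, forall e, 0 < e -> forall N, exists n, (N <= n)%N /\ ip (u n - v) (u n - v) <= e.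
Proof.
move=> hB.
pose A := closed_ball_ (fun w : H => `|w|) 0 (B + 1).
have Bn : forall n, A (u n).
  move=> n; rewrite /A /closed_ball_ /= sub0r normrN.
  have h := le_trans (norm_sq_le_ip (u n)) (hB n).
  have B0 : 0 <= B by apply: le_trans (hB n); exact: ip_ge0.
  case: (lerP `|u n| 1) => h1; first lra.
  have : `|u n| <= `|u n| ^+ 2 by rewrite expr2 ler_peMr // ltW.
  lra.
have cA : compact A.
  apply: bounded_closed_compact; last exact: closed_closed_ball_.
  exists (B + 1); split; first exact: num_real.
  move=> M hM w; rewrite /A /closed_ball_ /= sub0r normrN => hw.
  by apply: le_trans hw (ltW hM).
have FA : (u @ \oo) A by exists 0%N => // n _; exact: Bn.
have [v [_ hv]] := cA (u @ \oo) (fmap_proper_filter _ _) FA.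
exists v => e e0 N.
pose d1 := Num.min 1 (e / (d%:R + 1)).
have d10 : 0 < d1 by rewrite lt_min ltr01 divr_gt0 // ltr_wpDl.
have hN : (u @ \oo) [set w | exists2 n, (N <= n)%N & w = u n].
  by exists N => // n /= Nn; exists n.
have [w [[n Nn ->] hb]] := hv _ _ hN (nbhsx_ballx v d1 d10).
exists n; split => //.
move: hb; rewrite -ball_normE /ball_ /= => hb.
apply: (le_trans (ip_le_norm_sq _)); rewrite -normrN opprB.
have hd : d1 <= 1 by rewrite ge_min lexx.
have hd2 : d1 <= e / (d%:R + 1) by rewrite ge_min lexx orbT.
have n0 : 0 <= `|v - u n| by [].
have : `|v - u n| ^+ 2 <= d1 by rewrite expr2; nra.
have hde : d%:R * d1 <= e.
  have : d%:R * (e / (d%:R + 1)) <= e.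
    rewrite mulrA ler_pdivrMr ?ltr_wpDl //; nra.
  have : 0 <= (d%:R : R) by [].
  nra.
have : 0 <= (d%:R : R) by [].
nra.
Qed.
End IP.
Arguments orth {R d M u w}.
Arguments sub_add {R d M u v}.
Arguments sub_sub {R d M u v}.
Arguments sub_scale {R d M a u}.
Arguments perp_add {R d M u v}.
Arguments perp_sub {R d M u v}.
Arguments perp_scale {R d M a u}.
Arguments pos_small {R} [B e].
Arguments ip_small {R d} [u v B eta].

Theorem theorem4 (R : realType) (d : nat) (M : 'M[R]_d)
  (P : 'rV[R]_d -> 'rV[R]_d) (K : 'rV[R]_d -> \bar R) (alpha : R)
  (x Lam : nat -> 'rV[R]_d) :
  is_orth_proj_perp M P ->
  0 < alpha ->
  feasible K -> convex_fun K ->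
  Lam 0%N = 0 ->
  (forall n : nat, forall y : 'rV[R]_d,
     (K (x n.+1) + (ip (x n.+1) (Lam n) + alpha / 2 * enorm (x n.+1) ^+ 2)%:E
      <= K y + (ip y (Lam n) + alpha / 2 * enorm y ^+ 2)%:E)%E) ->
  (forall n : nat, Lam n.+1 = Lam n + alpha *: P (x n.+1)) ->
  (exists C : R, forall n : nat, (1 <= n)%N -> enorm (Lam n) <= C) ->
  exists (xs Ls : 'rV[R]_d),
    [/\ (fun n => x n.+1) @ \oo --> xs,
        (fun n => Lam n.+1) @ \oo --> Ls,
        in_sub M xs &
        forall y : 'rV[R]_d, in_sub M y ->
          (K xs + (alpha / 2 * enorm xs ^+ 2)%:E
           <= K y + (alpha / 2 * enorm y ^+ 2)%:E)%E].
Proof.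
move=> hP a0 [Kninf Klsc [y0 Ky0] _ _] Kconv L0 hmin0 hL [C hC].
have hmin : forall n y, (K (x n.+1) + (ip (x n.+1) (Lam n) + alpha / 2 * ip (x n.+1) (x n.+1))%:E
      <= K y + (ip y (Lam n) + alpha / 2 * ip y y)%:E)%E.
  by move=> n y; have := hmin0 n y; rewrite !enorm2.
clear hmin0.
have finE : forall z, (K z != +oo)%E -> K z = (fine (K z))%:E.
  by move=> z hz; rewrite fineK // fin_numE Kninf.
set ky0 := fine (K y0).
have Ky0E : K y0 = ky0%:E by exact: finE.
set k := fun n => fine (K (x n.+1)).
have Kfin : forall n, K (x n.+1) = (k n)%:E.
  move=> n; apply: finE; have := hmin n y0; rewrite Ky0E -EFinD.
  by case: (K (x n.+1)) => // /=.
have hminR : forall n y ky, K y = ky%:E ->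
   k n + ip (x n.+1) (Lam n) + alpha / 2 * ip (x n.+1) (x n.+1)
   <= ky + ip y (Lam n) + alpha / 2 * ip y y.
  by move=> n y ky Ky; have := hmin n y; rewrite Kfin Ky -!EFinD lee_fin !addrA.
have KEY : forall n y ky, K y = ky%:E ->
   k n + ip (x n.+1) (Lam n) + alpha / 2 * ip (x n.+1) (x n.+1)
   + alpha / 2 * ip (y - x n.+1) (y - x n.+1)
   <= ky + ip y (Lam n) + alpha / 2 * ip y y.
  move=> n y ky Ky.
  have hA : 0 <= ky - k n + ip (y - x n.+1) (Lam n) + alpha * ip (x n.+1) (y - x n.+1).
    apply: (@real_lim0 R _ (alpha / 2 * ip (y - x n.+1) (y - x n.+1))).
      by apply: mulr_ge0; [lra | exact: ip_ge0].
    move=> t t0 t1.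
    set z := t *: y + (1 - t) *: x n.+1.
    have hz : (K z <= (t * ky + (1 - t) * k n)%:E)%E.
      have := Kconv y (x n.+1) t; rewrite Ky Kfin -EFinM -EFinM -EFinD; apply.
      by rewrite (ltW t0) t1.
    have Kz : K z = (fine (K z))%:E.
      by apply: finE; move: hz; case: (K z).
    have h2 := hminR n z _ Kz.
    have h1 : fine (K z) <= t * ky + (1 - t) * k n by move: hz; rewrite Kz lee_fin.
    move: h1 h2; generalize (fine (K z)) => kz.
    rewrite /z !(ipDl, ipDr, ipZl, ipZr, ipNl, ipNr) (ipC (x n.+1) y).
    move=> h1 h2; nra.
  rewrite !(ipDl, ipDr, ipZl, ipZr, ipNl, ipNr) (ipC (x n.+1) y) in hA *.
  lra.
set p := fun n => P (x n.+1).
have pperp : forall n, in_perp M (p n) := fun n => (hP (x n.+1)).1.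
set q := fun n => x n.+1 - p n.
have qM : forall n, in_sub M (q n) := fun n => (hP (x n.+1)).2.
have Xqp : forall n, x n.+1 = q n + p n by move=> n; rewrite /q subrK.
have Lperp : forall n, in_perp M (Lam n).
  elim => [|n IH]; first by rewrite L0; exact: perp0.
  by rewrite hL; apply: perp_add => //; apply: perp_scale; exact: pperp.
have C0 : 0 <= C by apply: le_trans (hC 1%N isT); rewrite /enorm sqrtr_ge0.
have LB : forall n, ip (Lam n) (Lam n) <= C ^+ 2.
  case => [|n]; first by rewrite L0 ip0l sqr_ge0.
  rewrite -enorm2; apply: lerXn2r; rewrite ?nnegrE ?sqrtr_ge0 //; exact: hC.
set g := fun n => k n + ip (x n.+1) (Lam n) + alpha / 2 * ip (x n.+1) (x n.+1).
have a2 : 0 <= alpha / 2 by lra.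
have gB : forall n, g n <= ky0 + (ip y0 y0 + C ^+ 2) / 2 + alpha / 2 * ip y0 y0.
  move=> n; have h1 := KEY n y0 ky0 Ky0E.
  have h2 : 0 <= alpha / 2 * ip (y0 - x n.+1) (y0 - x n.+1) by rewrite mulr_ge0 // ip_ge0.
  have h3 : 2 * ip y0 (Lam n) <= ip y0 y0 + ip (Lam n) (Lam n).
    have := ip_ge0 (y0 - Lam n); rewrite !(ipDl, ipDr, ipNl, ipNr) (ipC (Lam n) y0); lra.
  have := LB n; rewrite /g; lra.
have gmono : forall n, g n + alpha / 2 * ip (p n) (p n) <= g n.+1.
  move=> n.
  have h := KEY n (x n.+2) (k n.+1) (Kfin n.+1).
  have e0 : ip (x n.+2) (p n) = ip (p n.+1) (p n).
    by rewrite (Xqp n.+1) ipDl (orth (qM _) (pperp _)) add0r.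
  have e1 : g n.+1 = k n.+1 + ip (x n.+2) (Lam n) + alpha / 2 * ip (x n.+2) (x n.+2)
      + alpha * ip (p n.+1) (p n).
    rewrite /g hL ipDr ipZr -/(p n) e0; lra.
  have e2 : ip (p n.+1 - p n) (p n.+1 - p n) <= ip (x n.+2 - x n.+1) (x n.+2 - x n.+1).
    rewrite (Xqp n) (Xqp n.+1) opprD addrACA.
    have o1 : ip (q n.+1 - q n) (p n.+1 - p n) = 0.
      by apply: orth; [apply: sub_sub | apply: perp_sub].
    exact: ip_orth_split.
  set D := ip (x n.+2 - x n.+1) (x n.+2 - x n.+1) in h e2.
  have e3 := ler_wpM2l a2 e2.
  rewrite !(ipDl, ipDr, ipNl, ipNr) (ipC (p n) (p n.+1)) in e3.
  have := ip_ge0 (p n.+1).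
  have := mulr_ge0 a2 (ip_ge0 (p n.+1)).
  rewrite e1 /g; lra.
have gmon : forall n, g n <= g n.+1.
  move=> n; have := gmono n; have := mulr_ge0 a2 (ip_ge0 (p n)); lra.
have gle : forall n m, (n <= m)%N -> g n <= g m := @mono_le _ g gmon.
have gC := @mono_cauchy _ g _ gmon gB.
have pp_ev : forall e, 0 < e -> ev (fun n => ip (p n) (p n) <= e).
  move=> e e0; have [N hN] := gC (e * (alpha / 2)) (mulr_gt0 e0 (divr_gt0 a0 (ltr0Sn _ 1))).
  exists N => n Nn; have := hN n n.+1 Nn; have := gmono n => h1 h2.
  have h3 : alpha / 2 * ip (p n) (p n) <= alpha / 2 * e by lra.
  by rewrite ler_pM2l // in h3; apply: divr_gt0.
have [Lb hLb] := CLUSTER _ _ LB.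
have Lbperp : in_perp M Lb.
  move=> y hy; apply: abs_eta0 => e e0.
  have [n [_ hn]] := hLb _ (pos_small (ip_ge0 y) e0) 0%N.
  have := ip_small (ip_ge0 y) e0 (lexx _) hn.
  by rewrite ipBr (orth hy (Lperp n)) sub0r normrN ipC.
have fej : forall n, ip (x n.+1) (Lam n - Lb) <= 0.
  move=> n; apply: le_eta0 => e e0.
  have [m [nm hm]] := hLb _ (pos_small (ip_ge0 (x n.+1)) e0) n.
  have h1 := KEY m (x n.+1) (k n) (Kfin n).
  have h2 := mulr_ge0 a2 (ip_ge0 (x n.+1 - x m.+1)).
  have h3 := gle _ _ nm.
  have h4 := ip_small (ip_ge0 _) e0 (lexx _) hm.
  have h5 : ip (x n.+1) (Lam m - Lb) <= `|ip (x n.+1) (Lam m - Lb)| := ler_norm _.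
  rewrite !ipBr in h4 h5 *; rewrite /g in h3; lra.
have pfej : forall n, ip (p n) (Lam n - Lb) <= 0.
  move=> n; have := fej n; rewrite (Xqp n) ipDl.
  by rewrite (orth (qM n) (perp_sub (Lperp n) Lbperp)) add0r.
set D := fun n => ip (Lam n - Lb) (Lam n - Lb).
have Dstep : forall n, D n.+1 <= D n + 2 * alpha * (g n.+1 - g n).
  move=> n; rewrite /D.
  have -> : Lam n.+1 - Lb = (Lam n - Lb) + alpha *: p n by rewrite hL addrAC.
  rewrite ip_step.
  have := pfej n; have := gmono n => h1 h2.
  have h3 := mulr_ge0 (ltW a0) (ip_ge0 (p n)).
  nra.
have Dmono : forall n m, (n <= m)%N -> D m <= D n + 2 * alpha * (g m - g n).
  move=> n m nm.
  have := @mono_le _ (fun n => 2 * alpha * g n - D n) _ n m nm.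
  by move=> h; have := h (fun j => ltac:(have := Dstep j; lra)) ; lra.
have Lconv_ev : forall e, 0 < e -> ev (fun m => D m <= e).
  move=> e e0.
  have [N hN] := gC (e / (4 * alpha)) (divr_gt0 e0 (mulr_gt0 (ltr0Sn _ 3) a0)).
  have [n [Nn hn]] := hLb (e / 2) (divr_gt0 e0 (ltr0Sn _ 1)) N.
  exists n => m nm; have h1 := Dmono _ _ nm; have h2 := hN n m Nn.
  have h3 : 2 * alpha * (g m - g n) <= 2 * alpha * (e / (4 * alpha)).
    by rewrite ler_pM2l // mulr_gt0.
  have -> : e = e / 2 + 2 * alpha * (e / (4 * alpha)) by field; lra.
  rewrite /D in h1 *; lra.
have Lconv : (fun n => Lam n.+1) @ \oo --> Lb.
  apply: CONV => e e0; have [N hN] := Lconv_ev e e0.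
  by exists N => n Nn; apply: hN; apply: leqW.
have Lip : forall m n, alpha ^+ 2 * ip (x m.+1 - x n.+1) (x m.+1 - x n.+1)
    <= ip (Lam m - Lam n) (Lam m - Lam n).
  move=> m n; apply: lip_aux => //.
  have h1 := KEY n (x m.+1) (k m) (Kfin m).
  have h2 := KEY m (x n.+1) (k n) (Kfin n).
  rewrite (ip_subC (x n.+1)) in h2.
  move: h1 h2; set Dx := ip (x m.+1 - x n.+1) (x m.+1 - x n.+1) => h1 h2.
  rewrite !(ipBl, ipBr); lra.
have XB : forall n, ip (x n.+1) (x n.+1) <= 2 * ip (x 1) (x 1) + 8 * C ^+ 2 / alpha ^+ 2.
  move=> n.
  have h1 := Lip n 0%N.
  have h2 : ip (Lam n - Lam 0%N) (Lam n - Lam 0%N) <= 4 * C ^+ 2.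
    rewrite L0 subr0; have := LB n; have := sqr_ge0 C; lra.
  have h3 : ip (x n.+1 - x 1) (x n.+1 - x 1) <= 4 * C ^+ 2 / alpha ^+ 2.
    rewrite ler_pdivlMr ?exprn_gt0 // mulrC; lra.
  have := ip_chain (x n.+1) (x 1) 0; rewrite !subr0.
  lra.
have [xs hxs] := CLUSTER _ _ XB.
have Xconv_ev : forall e, 0 < e -> ev (fun m => ip (x m.+1 - xs) (x m.+1 - xs) <= e).
  move=> e e0.
  have ea : 0 < e * alpha ^+ 2 / 16 by rewrite divr_gt0 // mulr_gt0 // exprn_gt0.
  have [N hN] := Lconv_ev _ ea.
  have [n [Nn hn]] := hxs (e / 4) (divr_gt0 e0 (ltr0Sn _ 3)) N.
  exists N => m Nm.
  have h1 := ip_chain (x m.+1) (x n.+1) xs.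
  have h2 := Lip m n.
  have h3 := ip_chain (Lam m) Lb (Lam n).
  have h4 := hN m Nm; have h5 := hN n Nn.
  rewrite /D ip_subC in h5.
  have h6 : ip (x m.+1 - x n.+1) (x m.+1 - x n.+1) <= e / 4.
    rewrite -(@ler_pM2l _ (alpha ^+ 2)) ?exprn_gt0 //.
    apply: (le_trans h2); apply: (le_trans h3); rewrite /D in h4.
    have -> : alpha ^+ 2 * (e / 4) = 2 * (e * alpha ^+ 2 / 16) + 2 * (e * alpha ^+ 2 / 16).
      by field.
    lra.
  lra.
have Xconv : (fun n => x n.+1) @ \oo --> xs.
  by apply: CONV => e e0; exact: Xconv_ev.
have xsM : in_sub M xs.
  rewrite /in_sub submxE; apply/eqP/rowP => j; rewrite [RHS]mxE.
  set c := cokermx M; set w := (col j c)^T.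
  have ipw : forall v, (v *m c) 0 j = ip v w.
    by move=> v; rewrite /ip trmxK !mxE; apply: eq_bigr => i _; rewrite !mxE.
  have qw : forall n, ip (q n) w = 0.
    move=> n; rewrite -ipw; have := qM n; rewrite /in_sub submxE -/c => /eqP ->.
    by rewrite mxE.
  rewrite ipw; apply: abs_eta0 => e e0.
  have dl0 := pos_small (ip_ge0 w) e0.
  have dl4 : 0 < e ^+ 2 / (4 * (ip w w + 1)) / 4 by rewrite divr_gt0.
  have [n [_ [h1 h2]]] := ev_ex _ (evI _ _ (Xconv_ev _ dl4) (pp_ev _ dl4)) 0%N.
  have h3 : ip (xs - q n) (xs - q n) <= e ^+ 2 / (4 * (ip w w + 1)).
    have -> : xs - q n = (xs - x n.+1) + p n.
      by rewrite /q opprB addrCA addrC.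
    apply: (le_trans (ip_tri _ _)); rewrite ip_subC; lra.
  have := ip_small (ip_ge0 w) e0 (lexx _) h3.
  by rewrite ipBr (ipC w (q n)) qw subr0 ipC.
exists xs, Lb; split => // y hy.
rewrite !enorm2.
case Ky: (K y) => [ky| |]; last first.
- by have := Kninf y; rewrite Ky.
- by rewrite addye ?leey.
set c := ky + alpha / 2 * ip y y - alpha / 2 * ip xs xs.
suff hK : (K xs <= c%:E)%E.
  apply: (le_trans (leeD2r _ hK)); rewrite -EFinD lee_fin /c; lra.
rewrite leNgt; apply/negP => hlt.
have [a [ca ha]] : exists a, c < a /\ (a%:E < K xs)%E.
  move: hlt; case: (K xs) => [r| |] //.
  - rewrite lte_fin => hr; exists ((c + r) / 2); split; first lra.
    by rewrite lte_fin; lra.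
  - by move=> _; exists (c + 1); split; [lra | rewrite ltey].
have [V hV hVa] := Klsc xs a ha.
have [eps /= eps0 hball] := (nbhs_ballP _ _).1 hV.
set eta := (a - c) / (alpha + 1).
have eta0 : 0 < eta by rewrite /eta divr_gt0; lra.
have heta : (alpha + 1) * eta = a - c by rewrite /eta; field; lra.
set BX := 2 * ip (x 1) (x 1) + 8 * C ^+ 2 / alpha ^+ 2.
have BX0 : 0 <= BX by apply: le_trans (XB 0%N); exact: ip_ge0.
have C20 : 0 <= C ^+ 2 := sqr_ge0 C.
have m1 : 0 < Num.min (eps ^+ 2 / 2) (Num.min eta (eta ^+ 2 / (4 * (BX + 1)))).
  rewrite !lt_min pos_small // eta0 andbT divr_gt0 // exprn_gt0 //.
have [n [_ [h1 h2]]] := ev_ex _ (evI _ _ (Xconv_ev _ m1) (pp_ev _ (pos_small C20 eta0))) 0%N.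
have ml : forall a' b' : R, Num.min a' b' <= a' by move=> a' b'; rewrite ge_min lexx.
have mr : forall a' b' : R, Num.min a' b' <= b' by move=> a' b'; rewrite ge_min lexx orbT.
have h1a := le_trans h1 (ml _ _).
have h1b := le_trans (le_trans h1 (mr _ _)) (ml _ _).
have h1c := le_trans (le_trans h1 (mr _ _)) (mr _ _).
clear h1.
have hb : ball xs eps (x n.+1).
  rewrite -ball_normE /ball_ /=.
  have hn := norm_sq_le_ip (xs - x n.+1); rewrite ip_subC in hn.
  have : `|xs - x n.+1| ^+ 2 < eps ^+ 2.
    apply: (le_lt_trans hn); apply: (le_lt_trans h1a); have := exprn_gt0 2 eps0; lra.
  by rewrite ltr_pXn2r // ?nnegrE ?normr_ge0 // ltW.
have hkn : a < k n by rewrite -lte_fin -Kfin; apply: hVa; apply: hball.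
have hk := KEY n y ky Ky.
rewrite (orth hy (Lperp n)) in hk.
have e1 : ip (x n.+1) (Lam n) = ip (p n) (Lam n).
  by rewrite (Xqp n) ipDl (orth (qM n) (Lperp n)) add0r.
have e2 := ip_expand (x n.+1) (xs - x n.+1).
rewrite [x n.+1 + _]addrC subrK in e2.
have s1 : 2 * `|ip (x n.+1) (xs - x n.+1)| <= eta.
  by apply: ip_small BX0 eta0 (XB n) _; rewrite ip_subC.
have s2 := ip_small C20 eta0 (LB n) h2.
have t1 : ip (x n.+1) (xs - x n.+1) <= `|ip (x n.+1) (xs - x n.+1)| := ler_norm _.
have t2 : - ip (Lam n) (p n) <= `|ip (Lam n) (p n)|.
  by have := ler_norm (- ip (Lam n) (p n)); rewrite normrN.
have hs := mulr_ge0 a2 (ip_ge0 (y - x n.+1)).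
rewrite ip_subC in h1b.
have P1 : alpha / 2 * (2 * ip (x n.+1) (xs - x n.+1)) <= alpha / 2 * eta.
  by apply: (ler_wpM2l a2); lra.
have P2 := ler_wpM2l a2 h1b.
have e3 : ip (p n) (Lam n) = ip (Lam n) (p n) by rewrite ipC.
have hc : c = ky + alpha / 2 * ip y y - alpha / 2 * (ip (x n.+1) (x n.+1)
    + 2 * ip (x n.+1) (xs - x n.+1) + ip (xs - x n.+1) (xs - x n.+1)) by rewrite /c e2.
rewrite e1 e3 in hk.
clearbody eta BX c.
lra.
Qed.
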